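(* Let $d\in\mathbb{N}$, $\mathbf{n},\mathbf{m}\in\mathbb{N}^d$ with $\mathbf{m}\ge\mathbf{n}$, and $\mathbf{0}\le\mathbf{w}\le\mathbf{n}-\mathbf{1}$. Let $\mathbf{x}_*\in\mathbb{C}^{\mathbf{n}}$ with $\operatorname{Im}(x_{*,\mathbf{w}})=0$ and set $\mathbf{y}=|\mathcal{F}\{\mathbf{x}_*\}|^2$ (so $f_{LS}(\mathbf{x}_*;\mathbf{y})=0$). For $\boldsymbol{\epsilon}\in\mathbb{C}^{\mathbf{n}}$ put $\boldsymbol{\mathcal{E}}=\mathcal{F}\{\boldsymbol{\epsilon}\}$, $\mathbf{X}_*=\mathcal{F}\{\mathbf{x}_*\}$, $\mathbf{R}=\operatorname{Re}(\boldsymbol{\mathcal{E}}\odot\overline{\mathbf{X}_*})\in\mathbb{R}^{\mathbf{m}}$, the Lyapunov candidate $V(\boldsymbol{\epsilon})=\tfrac12\|\boldsymbol{\epsilon}\|_2^2$, and $$\dot V(\boldsymbol{\epsilon})=\operatorname{Re}\bigl\langle \nabla V(\boldsymbol{\epsilon}),-\nabla f_{reg}(\mathbf{x}_*+\boldsymbol{\epsilon};\mathbf{y},1,\mathbf{w})\bigr\rangle=-\operatorname{Re}\bigl(\boldsymbol{\epsilon}^\dagger\,\nabla f_{reg}(\mathbf{x}_*+\boldsymbol{\epsilon};\mathbf{y},1,\mathbf{w})\bigr).$$ Then: (1) $V(\boldsymbol{\epsilon})\ge0$ for all $\boldsymbol{\epsilon}$, and (2) $V(\boldsymbol{\epsilon})=0$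 if and only if $\boldsymbol{\epsilon}=\mathbf{0}$; (3) for every $\boldsymbol{\epsilon}$ with $g(\boldsymbol{\epsilon}):=\|\boldsymbol{\mathcal{E}}\|_4^4-\sum_{\mathbf{k}}|\mathcal{E}_{\mathbf{k}}|^2|R_{\mathbf{k}}|<0$, one has $\dot V(\boldsymbol{\epsilon})<0$; (4) for any constants $0<\delta<1$ and $\alpha>0$, every $\boldsymbol{\epsilon}$ satisfying $\|\boldsymbol{\mathcal{E}}\|_4^4<\delta\sum_{\mathbf{k}}|\mathcal{E}_{\mathbf{k}}|^2|R_{\mathbf{k}}|$ and $\|\mathbf{R}\|_2^2>\alpha\|\boldsymbol{\epsilon}\|_2^2$ satisfies $$\dot V(\boldsymbol{\epsilon})\le-\frac{(1-\delta)(7+\delta)}{4}\,\alpha\,V(\boldsymbol{\epsilon}).$$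
   Context: Multi-index notation: $\mathbb{C}^{\mathbf{n}}=\mathbb{C}^{n_1\times\cdots\times n_d}$, inequalities between multi-indices componentwise, $M=\prod_i m_i$. $\mathcal{F}:\mathbb{C}^{\mathbf{n}}\to\mathbb{C}^{\mathbf{m}}$, $\mathcal{F}\{\mathbf{x}\}_{\mathbf{k}}=M^{-1/2}\sum_{\mathbf{0}\le\mathbf{i}\le\mathbf{n}-\mathbf{1}}x_{\mathbf{i}}e^{-2\pi j\sum_lk_li_l/m_l}$ ($\mathbf{0}\le\mathbf{k}<\mathbf{m}$, $j^2=-1$). Operations $|\cdot|$, $\overline{\cdot}$, $\operatorname{Re}$ are entrywise; $\odot$ is the entrywise product. $f_{LS}(\mathbf{x};\mathbf{y})=\tfrac14\||\mathcal{F}\{\mathbf{x}\}|^2-\mathbf{y}\|_2^2$, $f_{reg}(\mathbf{x};\mathbf{y},\lambda,\mathbf{w})=f_{LS}(\mathbf{x};\mathbf{y})+\tfrac\lambda2(\operatorname{Im}x_{\mathbf{w}})^2$. Gradients are real gradients under $\mathbb{C}^{\mathbf{n}}\cong\mathbb{R}^{2N}$ written as complex vectors, $\nabla f=\partial f/\partial\operatorname{Re}\mathbf{x}+j\,\partial f/\partial\operatorname{Im}\mathbf{x}$; thus $\nabla V(\boldsymbol{\epsilon})=\boldsymbol{\epsilon}$ and $\nabla f_{LS}(\mathbf{x})=\mathcal{F}^\dagger\{(|\mathcal{F}\{\mathbf{x}\}|^2-\mathbf{y})\odot\mathcal{F}\{\mathbf{x}\}\}$. *)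

(* Defs.v *)
From HB Require Import structures.
From mathcomp Require Import all_boot all_order all_algebra.
From mathcomp Require Import complex.
From mathcomp Require Import reals trigo.


Import Order.TTheory GRing.Theory Num.Theory.
Local Open Scope ring_scope.
Local Open Scope complex_scope.

Section PhaseRetrieval.
Context {R : realType} {d : nat}.

Definition idx (n : 'I_d -> nat) := {dffun forall l : 'I_d, 'I_(n l)}.

Definition arr (n : 'I_d -> nat) := idx n -> R[i].

Definition abs2 (z : R[i]) : R := complex.Re z ^+ 2 + complex.Im z ^+ 2.

Definition expj (t : R) : R[i] := Complex (cos t) (sin t).

Definition nrm (m : 'I_d -> nat) : R := (Num.sqrt (\prod_(l < d) (m l)%:R))^-1.

Definition phase {n m : 'I_d -> nat} (k : idx m) (i : idx n) : R :=
  \sum_(l < d) ((k l : nat) * (i l : nat))%:R / (m l)%:R.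

(* F : C^n -> C^m (zero-padded multidimensional DFT) *)
Definition DFT {n : 'I_d -> nat} (m : 'I_d -> nat) (x : arr n) : arr m := fun k =>
  (nrm m)%:C * \sum_(i : idx n) x i * expj (- (2 * pi * phase k i)).

Definition DFTadj (n : 'I_d -> nat) {m : 'I_d -> nat} (Y : arr m) : arr n := fun i =>
  (nrm m)%:C * \sum_(k : idx m) Y k * expj (2 * pi * phase k i).

Definition fLS {n m : 'I_d -> nat} (x : arr n) (y : idx m -> R) : R :=
  4^-1 * \sum_(k : idx m) (abs2 (DFT m x k) - y k) ^+ 2.

Definition freg {n m : 'I_d -> nat} (x : arr n) (y : idx m -> R) (lam : R)
  (w : idx n) : R := fLS x y + lam / 2 * (complex.Im (x w)) ^+ 2.

(* Real gradients (d/dRe + j d/dIm), written as complex arrays. *)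
Definition gradLS {n m : 'I_d -> nat} (x : arr n) (y : idx m -> R) : arr n :=
  DFTadj n (fun k => (abs2 (DFT m x k) - y k)%:C * DFT m x k).

Definition gradreg {n m : 'I_d -> nat} (x : arr n) (y : idx m -> R) (lam : R)
  (w : idx n) : arr n := fun i =>
  gradLS x y i + (if i == w then Complex 0 (lam * complex.Im (x w)) else 0).

Definition Vlyap {n : 'I_d -> nat} (eps : arr n) : R :=
  2^-1 * \sum_(i : idx n) abs2 (eps i).

Definition Vdot {n m : 'I_d -> nat} (xs : arr n) (y : idx m -> R) (w : idx n)
  (eps : arr n) : R :=
  - complex.Re (\sum_(i : idx n) conjc (eps i) * gradreg (fun j => xs j + eps j) y 1 w i).

End PhaseRetrieval.

Arguments arr R {d} n.

(* Main.v *)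
Require Import Defs.
From HB Require Import structures.
From mathcomp Require Import all_boot all_order all_algebra.
From mathcomp Require Import complex.
From mathcomp Require Import reals trigo.
From mathcomp Require Import ring lra.
From Stdlib Require Import FunctionalExtensionality.
Import Order.TTheory GRing.Theory Num.Theory.
Local Open Scope ring_scope.
Local Open Scope complex_scope.
Section S.
Variable R : realType.
Variable d : nat.
Variables n m : 'I_d -> nat.

Lemma ReD (x y : R[i]) : complex.Re (x + y) = complex.Re x + complex.Re y.
Proof. by case: x; case: y. Qed.
Lemma ImD (x y : R[i]) : complex.Im (x + y) = complex.Im x + complex.Im y.
Proof. by case: x; case: y. Qed.
Lemma Re_sum (I : finType) (f : I -> R[i]) :
  complex.Re (\sum_(i : I) f i) = \sum_(i : I) complex.Re (f i).
Proof. by apply: (big_morph _ ReD). Qed.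

Lemma perk (X E : R[i]) :
  complex.Re (((abs2 (X+E) - abs2 X)%:C * (X+E)) * conjc E) =
  2 * (complex.Re (E * conjc X))^+2 + 3 * complex.Re (E * conjc X) * abs2 E + abs2 E ^+2.
Proof. case: X => a b; case: E => c e. rewrite /abs2 /=. ring. Qed.

Lemma conj_expj (t : R) : conjc (expj t) = expj (- t).
Proof. by rewrite /expj /= cosN sinN. Qed.

Lemma DFTD (x e : arr R n) k :
  DFT m (fun j => x j + e j) k = DFT m x k + DFT m e k.
Proof. by rewrite /DFT -mulrDr -big_split; congr (_ * _); apply: eq_bigr => i _; rewrite mulrDl. Qed.

Lemma cjM (x y : R[i]) : conjc (x * y) = conjc x * conjc y.
Proof. by case: x => a b; case: y => c e; rewrite /=; congr Complex; ring. Qed.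
Lemma cjD (x y : R[i]) : conjc (x + y) = conjc x + conjc y.
Proof. by case: x => a b; case: y => c e; rewrite /=; congr Complex; ring. Qed.
Lemma cj0 : conjc (0 : R[i]) = 0.
Proof. by rewrite /= oppr0. Qed.
Lemma cjR (x : R) : conjc (x%:C) = x%:C.
Proof. by rewrite /= oppr0. Qed.
Lemma cj_sum (I : finType) (f : I -> R[i]) :
  conjc (\sum_(i : I) f i) = \sum_(i : I) conjc (f i).
Proof. by apply: (big_morph _ cjD cj0). Qed.

Lemma adj (e : arr R n) (Z : arr R m) :
  \sum_(i : idx n) conjc (e i) * DFTadj n Z i = \sum_(k : idx m) Z k * conjc (DFT m e k).
Proof.
rewrite /DFTadj /DFT.
under eq_bigr do rewrite mulr_sumr mulr_sumr.
under [RHS]eq_bigr do rewrite cjM cj_sum cjR mulr_sumr mulr_sumr.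
rewrite exchange_big; apply: eq_bigr => k _; apply: eq_bigr => i _.
rewrite cjM conj_expj opprK; ring.
Qed.

Lemma Vdot_eq (xs eps : arr R n) (w : idx n) : complex.Im (xs w) = 0 ->
  Vdot xs (fun k => abs2 (DFT m xs k)) w eps =
  - (\sum_(k : idx m) (2 * (complex.Re (DFT m eps k * conjc (DFT m xs k)))^+2
        + 3 * complex.Re (DFT m eps k * conjc (DFT m xs k)) * abs2 (DFT m eps k)
        + abs2 (DFT m eps k) ^+2) + complex.Im (eps w) ^+ 2).
Proof.
move=> hw; rewrite /Vdot /gradreg.
under eq_bigr do rewrite mulrDr.
rewrite big_split /= ReD.
rewrite [X in complex.Re X + complex.Re _](_ : _ = \sum_(i : idx n) conjc (eps i) * gradLS (fun j => xs j + eps j) (fun k => abs2 (DFT m xs k)) i) //.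
rewrite [\sum_i _ * (if _ then _ else _)](bigD1 w) //=.
rewrite [\sum_(i | i != w) _]big1; last by move=> i hi; rewrite ifN // mulr0.
rewrite ifT //.
rewrite addr0 {1}/gradLS adj Re_sum.
congr (- (_ + _)).
  apply: eq_bigr => k _; rewrite DFTD; exact: perk.
rewrite ImD hw add0r mul1r; case: (eps w) => a b /=.
by rewrite mulr0 sub0r mulNr opprK expr2.
Qed.

Lemma CS (I : finType) (u v : I -> R) :
  (\sum_(i : I) u i * v i) ^+ 2 <= (\sum_(i : I) u i ^+ 2) * (\sum_(i : I) v i ^+ 2).
Proof.
set A := \sum_i u i ^+ 2; set B := \sum_i v i ^+ 2; set C := \sum_i u i * v i.
have h1 : 0 <= \sum_i (C * u i - A * v i) ^+ 2 by apply: sumr_ge0 => i _; exact: sqr_ge0.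
have e1 : \sum_i (C * u i - A * v i) ^+ 2 = C^+2 * A - 2 * C * A * C + A ^+ 2 * B.
  rewrite (eq_bigr (fun i => C^+2 * u i ^+ 2 + (- (2 * C * A)) * (u i * v i) + A ^+ 2 * v i ^+ 2)).
    by rewrite !big_split /= -!mulr_sumr -/A -/B -/C; ring.
  by move=> i _; ring.
have A0 : 0 <= A by apply: sumr_ge0 => i _; exact: sqr_ge0.
case: (eqVneq A 0) => Ae.
  have hu : forall i, u i = 0.
    move=> i; apply/eqP; rewrite -sqrf_eq0; apply/eqP.
    by apply: (psumr_eq0P _ Ae) => // j _; exact: sqr_ge0.
  rewrite Ae /C big1 ?mul0r; first by rewrite expr2 mul0r.
  by move=> i _; rewrite hu mul0r.
have Ap : 0 < A by rewrite lt_def Ae A0.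
rewrite e1 in h1.
nra.
Qed.


Lemma bounds (xs eps : arr R n) (w : idx n) : complex.Im (xs w) = 0 ->
  let Rk := fun k => complex.Re (DFT m eps k * conjc (DFT m xs k)) in
  let e := fun k => abs2 (DFT m eps k) in
  let A := \sum_(k : idx m) Rk k ^+ 2 in
  let B := \sum_(k : idx m) e k ^+ 2 in
  let C := \sum_(k : idx m) e k * `|Rk k| in
  exists D I, Vdot xs (fun k => abs2 (DFT m xs k)) w eps = - (2 * A + 3 * D + B + I)
    /\ - C <= D /\ 0 <= I /\ C ^+ 2 <= A * B /\ 0 <= A /\ 0 <= B.
Proof.
move=> hw Rk e A B C.
have e0 : forall k, 0 <= e k by move=> k; rewrite /e /abs2; apply: addr_ge0; exact: sqr_ge0.
exists (\sum_(k : idx m) Rk k * e k), (complex.Im (eps w) ^+ 2).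
split.
  rewrite Vdot_eq //.
  rewrite (eq_bigr (fun k => 2 * Rk k ^+ 2 + 3 * (Rk k * e k) + e k ^+ 2)); last by move=> k _; rewrite /Rk /e; ring.
  by rewrite !big_split /= -!mulr_sumr -/A -/B.
split.
  rewrite /C -sumrN; apply: ler_sum => k _.
  have /andP[h _] : - `|Rk k| <= Rk k <= `|Rk k| by rewrite -ler_norml.
  have := e0 k; nra.
split; first exact: sqr_ge0.
split.
  rewrite mulrC /A (eq_bigr (fun k => `|Rk k| ^+ 2)); first exact: CS.
  by move=> k _; rewrite real_normK // num_real.
split; by apply: sumr_ge0 => k _; exact: sqr_ge0.
Qed.

End S.

Theorem theorem3p2 (R : realType) (d : nat) (n m : 'I_d -> nat)
  (w : idx n) (xs : arr R n) :
  (forall l, n l <= m l)%N ->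
  complex.Im (xs w) = 0 ->
  let y : idx m -> R := fun k => abs2 (DFT m xs k) in
  let E := fun eps : arr R n => DFT m eps in
  let Rv := fun (eps : arr R n) (k : idx m) =>
              complex.Re (E eps k * conjc (DFT m xs k)) in
  let E44 := fun eps : arr R n => \sum_(k : idx m) abs2 (E eps k) ^+ 2 in
  let S := fun eps : arr R n =>
              \sum_(k : idx m) abs2 (E eps k) * `|Rv eps k| in
  [/\ (forall eps : arr R n, 0 <= Vlyap eps),
      (forall eps : arr R n, Vlyap eps = 0 <-> eps = (fun _ => 0)),
      (forall eps : arr R n, E44 eps - S eps < 0 -> Vdot xs y w eps < 0) &
      (forall delta alpha : R, 0 < delta < 1 -> 0 < alpha ->
         forall eps : arr R n,
           E44 eps < delta * S eps ->
           \sum_(k : idx m) Rv eps k ^+ 2 > alpha * \sum_(i : idx n) abs2 (eps i) ->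
           Vdot xs y w eps <=
             - ((1 - delta) * (7 + delta) / 4) * alpha * Vlyap eps)].
Proof.
move=> _ hw y E Rv E44 S.
have a0 : forall z : R[i], 0 <= abs2 z by move=> z; rewrite /abs2; apply: addr_ge0; exact: sqr_ge0.
have N0 : forall eps : arr R n, 0 <= \sum_(i : idx n) abs2 (eps i) by move=> eps; apply: sumr_ge0 => i _.
split.
- move=> eps; rewrite /Vlyap; apply: mulr_ge0 => //; rewrite invr_ge0; lra.
- move=> eps; split.
    rewrite /Vlyap => /eqP; rewrite mulf_eq0 invr_eq0 pnatr_eq0 /= => /eqP h.
    apply: functional_extensionality => i.
    have := @psumr_eq0P _ _ _ _ (fun i _ => a0 (eps i)) h i isT.
    rewrite /abs2; case: (eps i) => a b /= hab.
    have ha : a = 0 by nra.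
    have hb : b = 0 by nra.
    by rewrite ha hb.
  move=> ->; rewrite /Vlyap big1 ?mulr0 // => i _.
  by rewrite /abs2 /= expr2 mulr0 addr0.
- move=> eps; rewrite /E44 /S /Rv /E /y => hg.
  have [D [I [-> [hD [hI [hCS [hA hB]]]]]]] := @bounds R d n m xs eps w hw.
  move: hg hD hCS hA hB.
  set A := \sum_k complex.Re _ ^+ 2; set B := \sum_k abs2 _ ^+ 2; set C := \sum_k abs2 _ * _ => hg hD hCS hA hB.
  have hCp : 0 < C by lra.
  have hAp : 0 < A by nra.
  have hCA : C < A by nra.
  have h3 : A * (2 * A + B - 3 * C) > 0 by nra.
  have h4 : 2 * A + B - 3 * C > 0 by nra.
  lra.
- move=> delta alpha /andP[hd0 hd1] hal eps; rewrite /E44 /S /Rv /E /y /Vlyap => hg hR.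
  have [D [I [-> [hD [hI [hCS [hA hB]]]]]]] := @bounds R d n m xs eps w hw.
  have := N0 eps.
  move: hg hR hD hCS hA hB.
  set A := \sum_k complex.Re _ ^+ 2; set B := \sum_k abs2 _ ^+ 2; set C := \sum_k abs2 _ * _; set N := \sum_i _ => hg hR hD hCS hA hB hN.
  have hAp : 0 < A by nra.
  have hCp : 0 < C by nra.
  have hCA : C < delta * A by nra.
  have h3a : 0 <= (delta * A - C) * (3 * A - C - delta * A).
    apply: mulr_ge0; first lra.
    have : delta * A <= A by nra.
    lra.
  have h3 : A * (2 * A + B - 3 * C) >= (1 - delta) * (2 - delta) * A ^+ 2 by nra.
  have h4 : 2 * A + B - 3 * C >= (1 - delta) * (2 - delta) * A by nra.
  have hp : 0 < (1 - delta) * (2 - delta) by apply: mulr_gt0; lra.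
  have h5 : (1 - delta) * (2 - delta) * A >= (1 - delta) * (2 - delta) * (alpha * N).
    by apply: ler_wpM2l; lra.
  have h6 : (1 - delta) * (2 - delta) >= (1 - delta) * (7 + delta) / 8 by nra.
  have h7 : (1 - delta) * (2 - delta) * (alpha * N) >= (1 - delta) * (7 + delta) / 8 * (alpha * N).
    apply: ler_wpM2r => //; nra.
  have -> : - ((1 - delta) * (7 + delta) / 4) * alpha * (2^-1 * N) = - ((1 - delta) * (7 + delta) / 8 * (alpha * N)) by field.
  lra.
Qed.
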